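(* Let $\alpha=\sigma_1\sigma_2^{-1}\sigma_3^{-1}\in B_4$ and let $\lambda$ be the largest positive real root of $X^4-2X^3-2X+1$ (which equals $\mathrm{GR}(\alpha)$). Then $$\lambda>\sup\{R(B_\alpha(t_0)) : t_0\in\mathbb{C},\ |t_0|=1\},$$ i.e. the inequality of Theorem 1 is strict for this $\alpha$. Equivalently, for no $t_0$ with $|t_0|=1$ does the polynomial $X^3-(1-t_0-t_0^{-1})X^2+(t_0^{-2}-t_0^{-1}+1)X+t_0^{-1}$ have a root of modulus $\ge\lambda$.
   Context: $\alpha$ acts on $F_4$ (right action) by $(x_1)\alpha=x_1x_4x_1^{-1}$, $(x_2)\alpha=x_1$, $(x_3)\alpha=x_4^{-1}x_2x_4$, $(x_4)\alpha=x_4^{-1}x_3x_4$. $B_\alpha=(\varphi(\partial((x_i)\alpha)/\partial x_k))_{i,k}$ is its Burau matrix (Fox derivatives, $\varphi(x_i)=t$), whose characteristic polynomial is $(X-1)\big(X^3-(1-t-t^{-1})X^2+(t^{-2}-t^{-1}+1)X+t^{-1}\big)$; $B_\alpha(t_0)$ is its evaluation at $t=t_0$ and $R$ the spectral radius. *)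

(* Defs.v *)
From mathcomp Require Import all_boot all_order all_algebra.
Set Implicit Arguments. Unset Strict Implicit. Unset Printing Implicit Defensive.
Import Order.TTheory GRing.Theory Num.Theory.
Local Open Scope ring_scope.

(* Words in the free group F_4 = <x_1,...,x_4>: a word is a list of letters
   (i, b) with i : 'I_4 (index 0 stands for x_1, ..., 3 for x_4) and
   b = false for x_(i+1), b = true for x_(i+1)^{-1}. *)
Definition letter := ('I_4 * bool)%type.
Definition word := seq letter.

(* phi (Fox derivative d w / d x_k) where phi(x_i) = t, computed by the
   Fox rules d(uv) = du + u dv, d(x_k) = 1, d(x_k^{-1}) = - x_k^{-1}. *)
Fixpoint fox_phi (F : fieldType) (t : F) (k : 'I_4) (w : word) : F :=
  match w with
  | [::] => 0
  | (i, b) :: w' =>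
      (if i == k then (if b then - t^-1 else 1) else 0)
      + (if b then t^-1 else t) * fox_phi t k w'
  end.

Definition x1 : 'I_4 := @Ordinal 4 0 isT.
Definition x2 : 'I_4 := @Ordinal 4 1 isT.
Definition x3 : 'I_4 := @Ordinal 4 2 isT.
Definition x4 : 'I_4 := @Ordinal 4 3 isT.

(* The images of the generators under alpha = sigma_1 sigma_2^{-1} sigma_3^{-1}:
   x1 -> x1 x4 x1^{-1}, x2 -> x1, x3 -> x4^{-1} x2 x4, x4 -> x4^{-1} x3 x4. *)
Definition alpha_img (i : 'I_4) : word :=
  match val i with
  | 0 => [:: (x1, false); (x4, false); (x1, true)]
  | 1 => [:: (x1, false)]
  | 2 => [:: (x4, true); (x2, false); (x4, false)]
  | _ => [:: (x4, true); (x3, false); (x4, false)]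
  end.

Definition burau_alpha (F : fieldType) (t0 : F) : 'M[F]_4 :=
  \matrix_(i < 4, k < 4) fox_phi t0 k (alpha_img i).

Definition lam_poly (F : fieldType) : {poly F} :=
  'X^4 - 2%:R *: 'X^3 - 2%:R *: 'X + 1.

(* Main.v *)
Require Import Defs.
From HB Require Import structures.
From mathcomp Require Import all_boot all_order all_algebra.
From mathcomp Require Import lra ring.
Set Implicit Arguments. Unset Strict Implicit. Unset Printing Implicit Defensive.
Import Order.TTheory GRing.Theory Num.Theory.
Local Open Scope ring_scope.

Section RealSub.
Variable C : numClosedFieldType.
Record RC := MkRC { rval : C; rvalP : rval \is Num.real }.
HB.instance Definition _ := [isSub for rval].
HB.instance Definition _ := [Choice of RC by <:].
HB.instance Definition _ := [SubChoice_isSubIntegralDomain of RC by <:].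
HB.instance Definition _ := [SubIntegralDomain_isSubField of RC by <:].

Definition RCle (x y : RC) := rval x <= rval y.
Definition RClt (x y : RC) := rval x < rval y.
Lemma norm_real (x : C) : `|x| \is Num.real. Proof. exact: normr_real. Qed.
Definition RCnorm (x : RC) : RC := MkRC (norm_real (rval x)).

Lemma RC_le0_add (x y : RC) : RCle 0 x -> RCle 0 y -> RCle 0 (x + y).
Proof. rewrite /RCle /=; exact: addr_ge0. Qed.
Lemma RC_le0_mul (x y : RC) : RCle 0 x -> RCle 0 y -> RCle 0 (x * y).
Proof. rewrite /RCle /=; exact: mulr_ge0. Qed.
Lemma RC_le0_anti (x : RC) : RCle 0 x -> RCle x 0 -> x = 0.
Proof. rewrite /RCle => h1 h2; apply: val_inj => /=; apply/eqP; rewrite eq_le h1 h2 //. Qed.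
Lemma RC_sub_ge0 (x y : RC) : RCle 0 (y - x) = RCle x y.
Proof. by rewrite /RCle /= subr_ge0. Qed.
Lemma RC_le0_total (x : RC) : RCle 0 x || RCle x 0.
Proof. rewrite /RCle /=; exact: (rvalP x). Qed.
Lemma RC_normN (x : RC) : RCnorm (- x) = RCnorm x.
Proof. by apply: val_inj => /=; rewrite normrN. Qed.
Lemma RC_ge0_norm (x : RC) : RCle 0 x -> RCnorm x = x.
Proof. by rewrite /RCle => h; apply: val_inj => /=; rewrite ger0_norm. Qed.
Lemma RC_lt_def (x y : RC) : RClt x y = (y != x) && RCle x y.
Proof. by rewrite /RClt /RCle lt_def. Qed.

HB.instance Definition _ := Num.IntegralDomain_isLeReal.Build RC
  RC_le0_add RC_le0_mul RC_le0_anti RC_sub_ge0 RC_le0_total RC_normN RC_ge0_norm RC_lt_def.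

End RealSub.

Lemma G_pos (R : realFieldType) (e : R) :
  let P := 4624 / 625 : R in
  -1 <= e -> e <= 3 ->
  0 < ((P - 1) * e^+2 + 1)^+2 - P * e^+2 * (3 - e).
Proof.
move=> P h1 h2.
have hS := sqr_ge0 ((P-1) * e^+2 + (2312/3999) * e - 17/20).
have hT := sqr_ge0 (e + 43/100).
rewrite /P in hS *.
nra.
Qed.

Lemma F0_pos (R : realFieldType) (c : R) :
  let e := 3 - 4 * c^+2 in let r0 := 68/25 : R in
  c^+2 <= 1 -> 0 < e^+2 * (r0^+2 - 1) + 2 * c * e * r0 + 1.
Proof.
move=> e r0 hc.
have he1 : -1 <= e by rewrite /e; nra.
have he2 : e <= 3 by rewrite /e; nra.
have hG := G_pos he1 he2.
set A := (4624/625 - 1) * e^+2 + 1 in hG.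
have hA : 0 < A by rewrite /A; nra.
have hr0 : r0^+2 = 4624/625 by rewrite /r0; field.
have hc2 : 4 * c^+2 = 3 - e by rewrite /e; ring.
case: (lerP 0 (c * e)) => hce.
  rewrite hr0 /r0; nra.
set B := - (2 * c * e * r0).
have hB : 0 < B.
  have -> : B = (c * e) * (- (2 * r0)) by rewrite /B; ring.
  rewrite nmulr_rgt0 // /r0; lra.
have hAB : B^+2 < A^+2.
  have -> : B^+2 = 4624/625 * e^+2 * (4 * c^+2) by rewrite /B -hr0; ring.
  rewrite hc2; lra.
have : B < A by nra.
have -> : e^+2 * (r0^+2 - 1) + 2 * c * e * r0 + 1 = A - B by rewrite /A /B hr0; ring.
lra.
Qed.

Lemma F_pos (R : realFieldType) (c rho : R) :
  let e := 3 - 4 * c^+2 in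
  c^+2 <= 1 -> 68/25 <= rho -> 0 < e^+2 * (rho^+2 - 1) + 2 * c * e * rho + 1.
Proof.
move=> e hc hr.
have h0 := F0_pos hc. rewrite -/e in h0.
set r0 := 68/25 : R in h0 hr.
set k := rho - r0.
have hk : 0 <= k by rewrite /k; lra.
have hrho : rho = r0 + k by rewrite /k; ring.
rewrite hrho.
case: (lerP 0 (e * (e * r0 + c))) => hs.
  have hk2 := sqr_ge0 (e * k).
  have hp : 0 <= k * (e * (e * r0 + c)) by apply: mulr_ge0.
  nra.
have hid : e^+2 * ((r0 + k)^+2 - 1) + 2 * c * e * (r0 + k) + 1
   = (e * k + e * r0 + c)^+2 + (1 - e^+2 - c^+2) by ring.
rewrite hid.
have hsq := sqr_ge0 (e * k + e * r0 + c).
suff : 0 < 1 - e^+2 - c^+2 by lra.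
have hc2 : c^+2 = (3 - e) / 4 by rewrite /e; field.
have h1 : e^+2 * r0 < - (e * c) by nra.
have h2 : e^+2 * e^+2 * r0^+2 < e^+2 * c^+2.
  have hp : 0 <= e^+2 * r0 by rewrite /r0; nra.
  have : (e^+2 * r0)^+2 < (e * c)^+2.
    rewrite -[(e * c)^+2]sqrrN.
    move: hp h1; set x := e^+2 * r0; set y := - (e * c); move=> hp h1; nra.
  by rewrite !exprMn.
have he0 : e != 0.
  apply/eqP => he; rewrite he in h1; lra.
have h3 : e^+2 * r0^+2 < 1.
  have hpos : 0 < e^+2 by rewrite exprn_even_gt0.
  nra.
rewrite hc2 /r0 in h3 *.
nra.
Qed.

Lemma hF_id (R : realFieldType) (r X : R) : r != 0 ->
  (r^+2)^+3 + r^+2 * (r^+2 + 1) * X * (3 * r^+2 - X^+2) + ((r^+2)^+2 + r^+2 + 1) * (3 * r^+2 - X^+2)^+2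
  = r^+6 * ((3 - 4 * (X / (2 * r))^+2)^+2 * ((r + r^-1)^+2 - 1) + 2 * (X / (2 * r)) * (3 - 4 * (X / (2 * r))^+2) * (r + r^-1) + 1).
Proof. move=> hr. field. exact hr. Qed.

Lemma real_main (R : realFieldType) (r X a : R) :
  229/100 < r -> X^+2 <= 4 * r^+2 ->
  ((r^+2 * a - (r^+2 + 1) * X) * (3 * r^+2 - X^+2) - r^+2 * r^+2 = 0) ->
  (r^+2 * a^+2 - a * (r^+2 + 1) * X + (r^+2 + 1)^+2 - r^+2 = 0) -> False.
Proof.
move=> hr hX G1 G2.
set R2 := r^+2 in hX G1 G2.
set e' := 3 * R2 - X^+2 in G1.
have hr0 : r != 0 by apply/eqP => h; rewrite h in hr; lra.
have hR2 : R2 != 0 by rewrite /R2 expf_neq0.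
set g1 := (R2 * a - (R2 + 1) * X) * e' - R2 * R2 in G1.
set g2 := R2 * a^+2 - a * (R2 + 1) * X + (R2 + 1)^+2 - R2 in G2.
have hH : R2 * (R2^+3 + R2 * (R2 + 1) * X * e' + (R2^+2 + R2 + 1) * e'^+2)
   = e'^+2 * R2 * g2 - g1 * (g1 + 2 * R2^+2 + (R2 + 1) * X * e').
  rewrite /g1 /g2; ring.
rewrite G1 G2 !(mul0r, mulr0, subr0) in hH.
move/eqP: hH; rewrite mulf_eq0 (negbTE hR2) /= => /eqP hH.
set c := X / (2 * r).
set rho := r + r^-1.
have hF : R2^+3 + R2 * (R2 + 1) * X * e' + (R2^+2 + R2 + 1) * e'^+2
  = r^+6 * ((3 - 4 * c^+2)^+2 * (rho^+2 - 1) + 2 * c * (3 - 4 * c^+2) * rho + 1).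
  exact: hF_id hr0.
have hc : c^+2 <= 1.
  have -> : c^+2 = X^+2 / (4 * R2) by rewrite /c /R2; field.
  rewrite ler_pdivrMr ?mul1r //.
  rewrite /R2; have : 0 < r^+2 by rewrite exprn_gt0 //; lra.
  lra.
have hrho : 68/25 <= rho.
  rewrite /rho.
  have hri : r^-1 = 1 / r by rewrite div1r.
  have hpos : 0 < r by lra.
  have : 68/25 * r <= r * r + 1 by nra.
  move=> h; rewrite -(ler_pM2r hpos).
  have -> : (r + r^-1) * r = r * r + 1 by rewrite mulrDl mulVf.
  lra.
have hp : 0 < (3 - 4 * c^+2)^+2 * (rho^+2 - 1) + 2 * c * (3 - 4 * c^+2) * rho + 1.
  exact: (F_pos hc hrho).
have h6 : 0 < r^+6 by rewrite exprn_gt0 //; lra.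
have := mulr_gt0 h6 hp.
by rewrite -hF hH ltxx.
Qed.

Lemma r0_big (R : realFieldType) (s d : R) : 0 <= s -> s^+2 = 3 -> 0 <= d -> d^+2 = 2 * s ->
  229/100 < (1 + s + d) / 2.
Proof.
move=> hs hs2 hd hd2.
have h1 : 173/100 < s by nra.
have h2 : 186/100 < d by nra.
lra.
Qed.

Lemma sum4 (F : fieldType) (f : 'I_4 -> F) : \sum_j f j = f x1 + f x2 + f x3 + f x4.
Proof.
rewrite !big_ord_recl big_ord0 addr0 !addrA.
by congr (_ + _ + _ + _); congr f; apply: val_inj.
Qed.

Lemma eig_eqs (F : fieldType) (t z : F) (v : 'rV[F]_4) : t != 0 ->
  v *m burau_alpha t = z *: v ->
  [/\ v 0 x1 * (1 + t * (t * (- t^-1))) + v 0 x2 = z * v 0 x1,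
      v 0 x3 * t^-1 = z * v 0 x2,
      v 0 x4 * t^-1 = z * v 0 x3 &
      v 0 x1 * t + v 0 x3 * (- t^-1 + t^-1 * t) + v 0 x4 * (- t^-1 + t^-1 * t) = z * v 0 x4].
Proof.
move=> ht /matrixP H.
have H0 := H 0 x1. have H1 := H 0 x2. have H2 := H 0 x3. have H3 := H 0 x4.
rewrite !mxE sum4 /= !mxE /= in H0.
rewrite !mxE sum4 /= !mxE /= in H1.
rewrite !mxE sum4 /= !mxE /= in H2.
rewrite !mxE sum4 /= !mxE /= in H3.
split.
- apply: (etrans _ H0); field; exact: ht.
- apply: (etrans _ H1); field; exact: ht.
- apply: (etrans _ H2); field; exact: ht.
- apply: (etrans _ H3); field; exact: ht.
Qed.

Lemma eig_char (F : fieldType) (t z : F) (v : 'rV[F]_4) : t != 0 ->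
  v *m burau_alpha t = z *: v -> v != 0 -> z != 0 ->
  z^+2 * (z - 1 + t) * (z - 1 + t^-1) - z * t^-1 * (1 - t^-1) * (z - 1 + t) - t^-1 = 0.
Proof.
move=> ht hv vn0 zn0.
have [E0 E1 E2 E3] := eig_eqs ht hv.
have hv2 : v 0 x3 = v 0 x4 / (t * z).
  apply: (mulfI zn0); rewrite -E2; field; rewrite ht zn0 //.
have hv1 : v 0 x2 = v 0 x4 / (t^+2 * z^+2).
  apply: (mulfI zn0); rewrite -E1 hv2; field; rewrite ht zn0 //.
have hv0 : v 0 x1 = (z * v 0 x4 - (v 0 x3 + v 0 x4) * (1 - t^-1)) / t.
  apply: (mulIf ht); rewrite divfK //; rewrite -E3; field; exact: ht.
have v3n0 : v 0 x4 != 0.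
  apply: contraNneq vn0 => h3.
  have h2 : v 0 x3 = 0 by rewrite hv2 h3 mul0r.
  have h1 : v 0 x2 = 0 by rewrite hv1 h3 mul0r.
  have h0 : v 0 x1 = 0 by rewrite hv0 h2 h3; field; exact: ht.
  apply/eqP/rowP => j; rewrite !mxE.
  case: j => [[|[|[|[|j]]]] hj] //=.
  - by rewrite -h0; congr (v 0 _); apply: val_inj.
  - by rewrite -h1; congr (v 0 _); apply: val_inj.
  - by rewrite -h2; congr (v 0 _); apply: val_inj.
  - by rewrite -h3; congr (v 0 _); apply: val_inj.
suff key : (z^+2 * (z - 1 + t) * (z - 1 + t^-1) - z * t^-1 * (1 - t^-1) * (z - 1 + t) - t^-1) * v 0 x4 = 0.
  by move/eqP: key; rewrite mulf_eq0 (negbTE v3n0) orbF => /eqP.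
have -> : (z^+2 * (z - 1 + t) * (z - 1 + t^-1) - z * t^-1 * (1 - t^-1) * (z - 1 + t) - t^-1) * v 0 x4
  = - t * z^+2 * (v 0 x1 * (1 + t * (t * (- t^-1))) + v 0 x2 - z * v 0 x1).
  rewrite hv0 hv1 hv2; field; rewrite ht zn0 //.
by rewrite E0 subrr mulr0.
Qed.

Lemma half (F : fieldType) (z zb t tb a : F) :
  t * tb = 1 -> z * zb != 1 -> zb != 0 ->
  z^+3 - a * z^+2 - tb * a * z + tb = 0 ->
  zb^+3 - a * zb^+2 - t * a * zb + t = 0 ->
  z * zb^-1 * (a - z - zb^-1) + tb = 0.
Proof.
move=> htt hzz hzb pz pzb.
have htb : tb != 0 by apply: contra_eq_neq htt => ->; rewrite mulr0 eq_sym oner_neq0.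
have ht : t = tb^-1 by apply: (mulIf htb); rewrite mulVf.
set w := zb^-1.
have pw : w^+3 - a * w^+2 - tb * a * w + tb = 0.
  have -> : w^+3 - a * w^+2 - tb * a * w + tb
     = tb * w^+3 * (zb^+3 - a * zb^+2 - t * a * zb + t).
    rewrite /w ht; field; rewrite htb hzb //.
  by rewrite pzb mulr0.
have hzw : z - w != 0.
  rewrite subr_eq0; apply: contra hzz => /eqP ->.
  by rewrite /w mulVf.
set S := z^+2 + z * w + w^+2 - a * (z + w) - tb * a.
have hS : S = 0.
  have : (z - w) * S = 0.
    have -> : (z - w) * S = (z^+3 - a * z^+2 - tb * a * z + tb) - (w^+3 - a * w^+2 - tb * a * w + tb)
      by rewrite /S; ring.
    by rewrite pz pw subrr.
  by move/eqP; rewrite mulf_eq0 (negbTE hzw) => /eqP.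
have -> : z * w * (a - z - w) + tb = (z^+3 - a * z^+2 - tb * a * z + tb) - z * S
  by rewrite /S; ring.
by rewrite pz hS mulr0 subrr.
Qed.

Lemma alg (F : fieldType) (z zb t tb a : F) :
  t * tb = 1 -> z * zb != 1 -> z != 0 -> zb != 0 -> a = 1 - t - tb ->
  z^+3 - a * z^+2 - tb * a * z + tb = 0 ->
  zb^+3 - a * zb^+2 - t * a * zb + t = 0 ->
  ((z * zb) * a - ((z * zb) + 1) * (z + zb)) * (3 * (z * zb) - (z + zb)^+2) - (z * zb) * (z * zb) = 0 /\
  (z * zb) * a^+2 - a * ((z * zb) + 1) * (z + zb) + ((z * zb) + 1)^+2 - (z * zb) = 0.
Proof.
move=> htt hzz hz hzb ha pz pzb.
have I1 := half htt hzz hzb pz pzb.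
have I2 : zb * z^-1 * (a - zb - z^-1) + t = 0.
  apply: (half (t:=tb)) => //; first by rewrite mulrC.
  by rewrite mulrC.
have htb : tb = - (z * zb^-1 * (a - z - zb^-1)) by apply/eqP; rewrite -addr_eq0 addrC I1.
have ht : t = - (zb * z^-1 * (a - zb - z^-1)) by apply/eqP; rewrite -addr_eq0 addrC I2.
split.
- have -> : ((z * zb) * a - ((z * zb) + 1) * (z + zb)) * (3 * (z * zb) - (z + zb)^+2) - (z * zb) * (z * zb)
     = (z * zb)^+2 * (a - 1 + t + tb).
    rewrite ht htb; field; rewrite hz hzb //.
  by rewrite ha; ring.
- have -> : (z * zb) * a^+2 - a * ((z * zb) + 1) * (z + zb) + ((z * zb) + 1)^+2 - (z * zb)
     = (z * zb) * (t * tb - 1).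
    rewrite ht htb; field; rewrite hz hzb //.
  by rewrite htt subrr mulr0.
Qed.


Lemma cubic_fact (F : fieldType) (t z : F) : t != 0 ->
  z^+2 * (z - 1 + t) * (z - 1 + t^-1) - z * t^-1 * (1 - t^-1) * (z - 1 + t) - t^-1
  = (z - 1) * (z^+3 - (1 - t - t^-1) * z^+2 - t^-1 * (1 - t - t^-1) * z + t^-1).
Proof. by move=> ht; field; exact: ht. Qed.

Lemma ev (F : fieldType) (x : F) : (lam_poly F).[x] = x^+4 - 2%:R * x^+3 - 2%:R * x + 1.
Proof. rewrite /lam_poly !(hornerD, hornerN, hornerZ, hornerXn, hornerX, hornerC). by []. Qed.

Theorem mainTheorem7 (C : numClosedFieldType) (lam : C)
  (lam_pos : 0 < lam) (lam_root : root (lam_poly C) lam)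
  (lam_max : forall r : C, 0 < r -> root (lam_poly C) r -> r <= lam) :
  exists c : C, c \is Num.real /\ c < lam /\
    forall t0 : C, `|t0| = 1 ->
      forall z : C, eigenvalue (burau_alpha t0) z -> `|z| <= c.
Proof.
have Kpos : (0 : C) < 229/100 by rewrite divr_gt0 ?ltr0n.
have Kreal : (229/100 : C) \is Num.real by apply: ger0_real; exact: ltW.
exists (229/100); split => //; split.
  set s3 := sqrtC (3 : C).
  have hs3 : 0 <= s3 by rewrite sqrtC_ge0 ler0n.
  have hs32 : s3^+2 = 3 by rewrite sqrtCK.
  set d := sqrtC (2 * s3).
  have hd : 0 <= d by rewrite sqrtC_ge0 mulr_ge0 ?ler0n.
  have hd2 : d^+2 = 2 * s3 by rewrite sqrtCK.
  have s3r : s3 \is Num.real by exact: ger0_real.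
  have dr : d \is Num.real by exact: ger0_real.
  have big : (229/100 : C) < (1 + s3 + d) / 2.
    have e1 : (MkRC s3r)^+2 = 3 :> RC C by apply: val_inj; exact: hs32.
    have e2 : (MkRC dr)^+2 = 2 * MkRC s3r :> RC C by apply: val_inj; exact: hd2.
    have := @r0_big (RC C) (MkRC s3r) (MkRC dr) hs3 e1 hd e2.
    by [].
  apply: (lt_le_trans big); apply: lam_max; first exact: lt_trans big.
  rewrite /root ev.
  apply/eqP.
  set r0 := (1 + s3 + d) / 2.
  have -> : r0 ^+ 4 - 2%:R * r0 ^+ 3 - 2%:R * r0 + 1
    = ((d^+2 - 2 * s3 - (s3^+2 - 3)) / 4) * (r0^+2 + (s3 - 1) * r0 + 1) + (s3^+2 - 3) * r0^+2.
    by rewrite /r0; field.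
  by rewrite hd2 hs32 !subrr !(mul0r, mulr0, add0r, addr0, subr0).
move=> t0 ht0 z hz.
have t0n0 : t0 != 0 by apply/eqP => h; move: ht0; rewrite h normr0 => /eqP; rewrite eq_sym oner_eq0.
have hinv : t0^-1 = t0^* by rewrite invC_norm ht0 expr1n invr1 mul1r.
have htt : t0 * t0^* = 1 by rewrite -normCK ht0 expr1n.
case/eigenvalueP: hz => v hv vn0.
have zr : `|z| \is Num.real by exact: normr_real.
case: (eqVneq z 0) => [-> | zn0]; first by rewrite normr0 ltW.
have Q := eig_char t0n0 hv vn0 zn0.
rewrite real_leNgt //; apply/negP => hK.
have zn1 : z != 1 by apply/eqP => h; move: hK; rewrite h normr1 => hK; move: hK; rewrite ltr_pdivrMr ?ltr0n // mul1r ltr_nat.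
rewrite cubic_fact // in Q.
move/eqP: Q; rewrite mulf_eq0 subr_eq0 (negbTE zn1) /= hinv => /eqP pz.
set a := 1 - t0 - t0^* in pz.
have ha : a = 1 - t0 - t0^* by [].
have hac : a^* = a by rewrite {1}ha !rmorphB /= conjC1 conjCK ha addrAC.
have pzb : z^*^+3 - a * z^*^+2 - t0 * a * z^* + t0 = 0.
  have := congr1 (fun x => x^*) pz.
  rewrite /= !rmorphD !rmorphN !rmorphM /= hac conjCK conjC0 => h.
  by apply: (etrans _ h); ring.
have hr : z * z^* = `|z|^+2 by rewrite normCK.
have r1 : 1 < `|z| by apply: lt_trans hK; rewrite ltr_pdivlMr ?ltr0n // mul1r ltr_nat.
have hzz : z * z^* != 1.
  rewrite hr; apply/eqP => h.
  have : 1 < `|z|^+2 by rewrite expr_gt1 //; exact: ltW (lt_trans ltr01 r1).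
  by rewrite h ltxx.
have zbn0 : z^* != 0 by rewrite conjC_eq0.
have [G1 G2] := alg htt hzz zn0 zbn0 ha pz pzb.
rewrite hr in G1 G2.
have Xr : z + z^* \is Num.real by apply/CrealP; rewrite rmorphD /= conjCK addrC.
have ar : a \is Num.real by apply/CrealP.
apply: (@real_main (RC C) (MkRC zr) (MkRC Xr) (MkRC ar)).
- exact: hK.
- have hX : `|z + z^*| <= 2 * `|z| by rewrite (le_trans (ler_normD _ _)) // norm_conjC mulr2n mulrDl mul1r.
  have : `|z + z^*|^+2 <= (2 * `|z|)^+2.
    by rewrite ler_pXn2r // ?nnegrE ?mulr_ge0 ?ler0n.
  rewrite real_normK // exprMn => h.
  have h4 : (z + z^*)^+2 <= 4 * `|z|^+2.
    have e4 : (2 : C)^+2 = 4 by ring.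
    by move: h; rewrite e4.
  exact: h4.
- by apply: val_inj; exact: G1.
- by apply: val_inj; exact: G2.
Qed.
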